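(* For each $n\geq 2$, there exist sets $D_n\subseteq\mathbb{Q}^n$ which are dense in $\mathbb{Q}^n$ (with respect to the product topology) and such that no two distinct points of $D_n$ are colinear.
   Context: Two points of $\mathbb{Q}^n$ are colinear if they share a common coordinate, i.e. $a_i=b_i$ for some $i\leq n$. *)

(* Defs.v *)
From mathcomp Require Import all_boot all_order all_algebra.
Set Implicit Arguments. Unset Strict Implicit. Unset Printing Implicit Defensive.
Import Order.TTheory GRing.Theory Num.Theory.
Local Open Scope ring_scope.

Definition colinear (n : nat) (a b : 'I_n -> rat) : Prop :=
  exists i : 'I_n, a i = b i.

(* Density in Q^n for the product topology (each factor Q with its usual
   order/metric topology): every nonempty basic open set, i.e. every product
   of nonempty open intervals (a_i, b_i), meets D. *)
Definition dense_Qn (n : nat) (D : ('I_n -> rat) -> Prop) : Prop :=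
  forall a b : 'I_n -> rat, (forall i, a i < b i) ->
    exists d, D d /\ forall i, a i < d i < b i.

(* Main.v *)
Require Import Defs.
From mathcomp Require Import all_boot all_order all_algebra.
From mathcomp Require Import ring lra.
Import Order.TTheory GRing.Theory Num.Theory.
Local Open Scope ring_scope.

Definition MM (c j : nat) : nat := (2 ^ c.+1 * 3 ^ j.+1)%N.

Definition num6 (a : rat) (M : nat) : int := 6 * (Num.floor (a * M%:R / 6) + 1) + 1.

Definition vv (a : rat) (M : nat) : rat := (num6 a M)%:~R / (M%:Z)%:~R.

Lemma MM_gt0 c j : (0 < MM c j)%N.
Proof. by rewrite /MM muln_gt0 !expn_gt0. Qed.

Lemma coprime6 (t : int) : coprime (absz (6 * t + 1)) 6.
Proof.
case: t => k.
- have -> : absz (6 * Posz k + 1) = (6 * k + 1)%N by [].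
  by rewrite -coprime_modl mulnC modnMDl.
- have -> : absz (6 * Negz k + 1) = (k * 6 + 5)%N.
    have -> : 6 * Negz k + 1 = - (k * 6 + 5)%N%:Z.
      by rewrite NegzE !PoszD !PoszM /=; ring.
    by rewrite abszN.
  by rewrite -coprime_modl modnMDl.
Qed.

Lemma den_vv a c j : denq (vv a (MM c j)) = (MM c j)%:Z.
Proof.
rewrite /vv coprimeq_den.
  by have := MM_gt0 c j; case: (MM c j).
have h6 : coprime (absz (num6 a (MM c j))) (2 * 3) by apply: coprime6.
move: h6; rewrite coprimeMr => /andP [h2 h3].
rewrite /= /MM coprimeMr !coprimeXr //; apply/andP; split; assumption.
Qed.

Lemma MM_inj c j c' j' : MM c j = MM c' j' -> c = c' /\ j = j'.
Proof.
move=> h.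
have h2 : logn 2 (MM c j) = logn 2 (MM c' j') by rewrite h.
have h3 : logn 3 (MM c j) = logn 3 (MM c' j') by rewrite h.
move: h2 h3; rewrite /MM !lognM ?expn_gt0 // !lognX.
have -> : logn 2 2 = 1%N by [].
have -> : logn 2 3 = 0%N by [].
have -> : logn 3 2 = 0%N by [].
have -> : logn 3 3 = 1%N by [].
rewrite !muln0 !muln1 addn0 add0n.
by rewrite addn0 add0n => -[->] -[->].
Qed.

Lemma vv_gt a M : (0 < M)%N -> a < vv a M.
Proof.
move=> M0; rewrite /vv /num6.
have Mp : 0 < (M%:Z)%:~R :> rat by rewrite ltr0z ltz_nat.
rewrite ltr_pdivlMr //.
have := floorD1_gt (a * M%:R / 6).
set f := Num.floor _ => hf.
have : a * M%:R < 6 * (f + 1)%:~R.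
  by rewrite -ltr_pdivrMl // mulrC.
rewrite -[(M%:Z)%:~R]/(M%:R) => h.
rewrite intrD intrM; apply: lt_trans h _.
by rewrite ltrDl.
Qed.

Lemma vv_le a M : (0 < M)%N -> vv a M <= a + 7 / M%:R.
Proof.
move=> M0; rewrite /vv /num6.
have Mp : 0 < M%:R :> rat by rewrite ltr0n.
rewrite -[(M%:Z)%:~R]/(M%:R) ler_pdivrMr //.
have := floor_le (a * M%:R / 6).
set f := Num.floor _ => hf.
have hf' : 6 * f%:~R <= a * M%:R.
  by rewrite -ler_pdivlMl // mulrC.
have -> : (a + 7 / M%:R) * M%:R = a * M%:R + 7.
  by field; rewrite gt_eqF.
rewrite !intrD !intrM.
have -> : (6%:~R : rat) = 6 by [].
have -> : (1%:~R : rat) = 1 by [].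
lra.
Qed.

Definition box n := ({ffun 'I_n -> rat} * {ffun 'I_n -> rat})%type.

Definition pt n (c j : nat) : 'I_n -> rat :=
  match @unpickle (box n) c with
  | Some ab => fun i => vv (ab.1 i) (MM c j)
  | None => fun i => vv 0 (MM c j)
  end.

Theorem proposition1p4 (n : nat) (hn : (2 <= n)%N) :
  exists D : ('I_n -> rat) -> Prop,
    dense_Qn D /\
    (forall x y, D x -> D y -> x <> y -> ~ colinear x y).
Proof.
exists (fun x => exists c j, x = pt n c j); split.
- move=> a b hab.
  pose c := pickle ((finfun a, finfun b) : box n).
  pose w i := b i - a i.
  pose N := (\sum_(i < n) absz (Num.floor (7 / w i)))%N.
  exists (pt n c N); split; first by exists c, N.
  move=> i.
  have -> : pt n c N i = vv (a i) (MM c N).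
    by rewrite /pt /c pickleK /= ffunE.
  have M0 := MM_gt0 c N.
  apply/andP; split; first exact: vv_gt.
  apply: (le_lt_trans (@vv_le (a i) (MM c N) M0)).
  have wp : 0 < w i by rewrite subr_gt0.
  have hN : (absz (Num.floor (7 / w i)) <= N)%N.
    by rewrite /N (bigD1 i) //= leq_addr.
  have hM : (N.+1 < MM c N)%N.
    rewrite /MM; apply: (@leq_trans (3 ^ N.+1)); first exact: ltn_expl.
    by rewrite leq_pmull // expn_gt0.
  have h1 := floorD1_gt (7 / w i).
  have h2 : (Num.floor (7 / w i) + 1)%:~R <= (MM c N)%:R :> rat.
    rewrite -[(MM c N)%:R]/((MM c N)%:Z%:~R) ler_int.
    have : (absz (Num.floor (7 / w i)))%:Z + 1 <= (MM c N)%:Z.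
      by rewrite -PoszD lez_nat addn1 ltnW // (leq_ltn_trans _ hM) // ltnS.
    apply: le_trans; rewrite lerD2r abszE; exact: ler_norm.
  have h3 : 7 / w i < (MM c N)%:R := lt_le_trans h1 h2.
  have Mp : 0 < (MM c N)%:R :> rat by rewrite ltr0n.
  rewrite -ltrBrDl ltr_pdivrMr // mulrC -ltr_pdivrMr //.
- move=> x y [c [j ->]] [c' [j' ->]] hne [i hi].
  have : denq (pt n c j i) = denq (pt n c' j' i) by rewrite hi.
  have dp : forall c j, denq (pt n c j i) = (MM c j)%:Z.
    by move=> c0 j0; rewrite /pt; case: unpickle => [ab|]; rewrite den_vv.
  rewrite !dp => -[] /MM_inj [ec ej]; apply: hne; by rewrite ec ej.
Qed.
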